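(* There is a positive absolute constant $k$ such that for every integer $c\ge 3$, $$G_c^{2/\varphi(c)}>k\,c.$$
   Context: For a positive integer $n$, $R(n)$ denotes the product of the distinct primes dividing $n$. $\varphi$ is Euler's totient function. For $c\ge3$, $G_c$ is the product of $R(abc)$ over all pairs of positive integers $(a,b)$ with $a+b=c$, $a<b$, $\gcd(a,b)=1$ (there are $\varphi(c)/2$ such pairs), so $G_c^{2/\varphi(c)}$ is the geometric mean of these radicals. *)

(* Defs.v *)
From mathcomp Require Import all_boot.
From Stdlib Require Import Reals.

Definition rad (n : nat) : nat := \prod_(p <- primes n) p.

(* G_c: product of rad(a*b*c) over pairs (a,b) of positive integers with
   a + b = c, a < b, gcd(a,b) = 1. We index by a, with b = c - a. *)
Definition G (c : nat) : nat :=
  \prod_(0 <= a < c | (0 < a) && (a < c - a) && coprime a (c - a))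
     rad (a * (c - a) * c).

(* Main.v *)
Require Import Defs.
From mathcomp Require Import all_boot.
From Stdlib Require Import Reals.
From mathcomp Require Import all_boot zify.
From Stdlib Require Import Lra.

Definition Sf (N a : nat) := \prod_(0 <= p < N.+1 | prime p) p ^ (logn p a).-1.

Lemma rad_range N n : 0 < n <= N -> rad n = \prod_(0 <= p < N.+1 | p \in primes n) p.
Proof.
move=> /andP[n0 nN]; rewrite /rad -[RHS]big_filter; apply: perm_big.
apply: uniq_perm; first exact: primes_uniq.
  by rewrite filter_uniq // iota_uniq.
move=> p; rewrite mem_filter mem_index_iota /=.
case pp: (p \in primes n) => //=.
move: pp; rewrite mem_primes => /and3P[_ _ pd].
have := dvdn_leq n0 pd; lia.
Qed.

Lemma lognNP p n : ~~ prime p -> logn p n = 0.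
Proof. by move=> np; rewrite lognE (negbTE np). Qed.

Lemma rad_S N n : 0 < n <= N -> n = rad n * Sf N n.
Proof.
move=> /andP[n0 nN].
rewrite -{1}(partnT n0) (widen_partn _ nN) (@rad_range N n); last by rewrite n0 nN.
rewrite /Sf.
rewrite [in LHS]big_mkcond [in X in X * _]big_mkcond [in X in _ * X]big_mkcond -big_split /=.
apply: eq_bigr => p _.
case pp: (prime p) => /=; last by rewrite lognNP ?pp // mem_primes pp.
case pn: (p \in primes n).
  by rewrite -expnS prednK // logn_gt0.
by move: pn; rewrite -logn_gt0 lt0n => /negbFE/eqP ->.
Qed.

Lemma radM m n : 0 < m -> 0 < n -> coprime m n -> rad (m * n) = rad m * rad n.
Proof.
move=> m0 n0 cmn; rewrite /rad -big_cat; apply: perm_big.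
apply: uniq_perm; first exact: primes_uniq.
  rewrite cat_uniq !primes_uniq /= andbT; apply/hasPn => p pn; apply/negP => pm.
  move: pn pm; rewrite !mem_primes => /and3P[pp _ pn] /and3P[_ _ pm].
  have : p %| gcdn m n by rewrite dvdn_gcd pm pn.
  by rewrite (eqP cmn) dvdn1 => /eqP p1; move: pp; rewrite p1.
by move=> p; rewrite mem_cat primesM.
Qed.

Definition E p N := \sum_(0 <= a < N.+1) (logn p a).-1.

Lemma logn_split p n : prime p -> logn p n = (p %| n) * (0 < n) + (logn p n).-1.
Proof.
move=> pp; case: (posnP n) => [->|n0]; first by rewrite logn0 muln0.
rewrite muln1; case pn: (p %| n).
  have : 0 < logn p n by rewrite logn_gt0 mem_primes pp n0 pn.
  lia.
have : logn p n = 0.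
  by apply/eqP; rewrite -leqn0 leqNgt logn_gt0 mem_primes pp n0 pn.
lia.
Qed.

Lemma E_fact p N : prime p -> E p N = logn p ((N %/ p)`!).
Proof.
move=> pp; elim: N => [|N IH].
  by rewrite /E big_nat1 logn0 div0n fact0 logn1.
rewrite /E big_nat_recr //= -/(E p N) IH divnS ?prime_gt0 //.
case pN: (p %| N.+1) => /=.
  rewrite add1n factS lognM ?fact_gt0 // addnC.
  have -> : (N %/ p).+1 = N.+1 %/ p by rewrite divnS ?prime_gt0 // pN.
  congr (_ + _).
  move: pN => /dvdnP[b Hb]; rewrite Hb mulnK ?prime_gt0 //.
  have b0 : 0 < b by case: b Hb => [|b] //; rewrite mul0n.
  by rewrite (lognM p b0 (prime_gt0 pp)) (logn_prime p pp) eqxx addn1.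
have := logn_split p N.+1 pp; rewrite pN /= add0n.
case: (logn p N.+1) => [|k] /= H; first by rewrite addn0.
lia.
Qed.

Lemma fact_rec p M : prime p -> logn p (M`!) = M %/ p + logn p ((M %/ p)`!).
Proof.
move=> pp; elim: M => [|M IH]; first by rewrite div0n fact0 logn1.
rewrite factS lognM ?fact_gt0 // IH -(E_fact p M pp) -(E_fact p M.+1 pp).
rewrite [E p M.+1]/E big_nat_recr //= -/(E p M).
rewrite divnS ?prime_gt0 //.
have := logn_split p M.+1 pp; rewrite muln1.
set K := (logn p M.+1).-1; lia.
Qed.

Lemma fact_bound p M : prime p -> (p - 1) * logn p (M`!) <= M.
Proof.
move=> pp; elim/ltn_ind: M => M IH.
case: (posnP M) => [->|M0]; first by rewrite fact0 logn1 muln0.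
rewrite fact_rec //.
have := IH (M %/ p) (ltn_Pdiv (prime_gt1 pp) M0).
have := leq_trunc_div M p.
have := prime_gt1 pp.
set q := M %/ p; set L := logn p q`!.
nia.
Qed.

Lemma E_bound p N : prime p -> p * (p - 1) * E p N <= N.
Proof.
move=> pp; rewrite E_fact //.
have := fact_bound p (N %/ p) pp.
have := leq_trunc_div N p.
set q := N %/ p; set L := logn p q`!.
nia.
Qed.

Lemma prodS N : \prod_(0 <= a < N.+1) Sf N a = \prod_(0 <= p < N.+1 | prime p) p ^ (E p N).
Proof.
rewrite /Sf exchange_big /=; apply: eq_bigr => p _; by rewrite /E expn_sum.
Qed.

Lemma seq_max (s : seq nat) : s != [::] -> exists2 m, m \in s & forall x, x \in s -> x <= m.
Proof.
elim: s => [//|x t IH] _.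
case: (eqVneq t [::]) => [->|tn].
  by exists x; rewrite ?mem_seq1 // => y; rewrite mem_seq1 => /eqP ->.
have [m mt Hm] := IH tn.
case: (leqP x m) => xm.
  exists m; first by rewrite in_cons mt orbT.
  by move=> y; rewrite in_cons => /orP[/eqP ->|/Hm].
exists x; first by rewrite in_cons eqxx.
move=> y; rewrite in_cons => /orP[/eqP ->//|/Hm ym]; lia.
Qed.

Lemma fact_le_prod (s : seq nat) : uniq s -> all (fun x => 0 < x) s ->
  (size s)`! <= \prod_(x <- s) x.
Proof.
move Hn: (size s) => n; elim: n s Hn => [|n IH] s Hn us ps; first by case: s Hn {us ps} => // _; rewrite big_nil.
have sn : s != [::] by case: s Hn {us ps}.
have [m ms Hm] := seq_max _ sn.
rewrite (perm_big _ (perm_to_rem ms)) big_cons factS.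
have szm : size s <= m.
  rewrite -(size_iota 1 m); apply: uniq_leq_size => // x xs.
  have := Hm x xs; have := allP ps x xs; rewrite mem_iota; lia.
apply: leq_mul; first lia.
apply: IH.
- by rewrite size_rem // Hn.
- exact: rem_uniq.
- by apply/allP => x /mem_rem xs; exact: (allP ps).
Qed.

Lemma ratio (s : seq nat) b : 0 < b -> sorted ltn s -> all (fun x => b < x) s ->
  b * \prod_(x <- s) x <= (b + size s) * \prod_(x <- s) x.-1.
Proof.
elim: s b => [|x t IH] b b0 /=; first by rewrite !big_nil addn0.
move=> st /andP[bx bt].
have pt := st; have tt : sorted ltn t by case: t st {pt bt IH} => //= y t /andP[].
have att : all (fun y => b.+1 < y) t.
  have := order_path_min ltn_trans pt; move/allP => H; apply/allP => y yt.
  have := H y yt; lia.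
have := IH b.+1 (ltn0Sn b) tt att.
rewrite !big_cons.
set A := \prod_(y <- t) y; set B := \prod_(y <- t) y.-1.
move=> H.
have h1 : b * x <= b.+1 * x.-1 by lia.
have h2 := leq_mul h1 (leqnn A).
have h3 := leq_mul (leqnn x.-1) H.
set y := x.-1 in h1 h2 h3 *.
rewrite addSnnS in h3.
nia.
Qed.

Lemma totient_rad c : 0 < c ->
  totient c * rad c = c * \prod_(p <- primes c) p.-1.
Proof.
move=> c0; rewrite totientE // /rad.
have Hc : c = \prod_(p <- primes c) p ^ logn p c.
  by rewrite {1}(prod_prime_decomp c0) prime_decompE big_map.
transitivity ((\prod_(p <- primes c) p ^ logn p c) * \prod_(p <- primes c) p.-1); last by rewrite -Hc.
rewrite -!big_split /=; apply: eq_big_seq => p pc.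
have : 0 < logn p c by rewrite logn_gt0.
case: (logn p c) => [//|l] _ /=.
rewrite expnS; lia.
Qed.

Lemma cop_sub a c : a <= c -> coprime a (c - a) = coprime a c.
Proof. by move=> ac; rewrite /coprime -{2}(subnK ac) gcdnDr. Qed.

Lemma cop_sub2 a c : a <= c -> coprime (c - a) c = coprime a c.
Proof.
move=> ac; rewrite /coprime -{2}(subnK ac) gcdnDl gcdnC.
by rewrite -/(coprime a (c - a)) cop_sub.
Qed.

Lemma cop0 c : 1 < c -> coprime 0 c = false.
Proof. by rewrite /coprime gcd0n => c1; apply/negbTE; rewrite neq_ltn c1 orbT. Qed.

Lemma cop_half i c : 2 < c -> coprime i c -> i != c - i.
Proof.
move=> c2 ic; apply/eqP => e.
have ce : c = i + i by lia.
move: ic; rewrite ce /coprime gcdnDl gcdnn => /eqP i1; lia.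
Qed.

Lemma prod_const (r : seq nat) (P : pred nat) x :
  \prod_(i <- r | P i) x = x ^ (\sum_(i <- r | P i) 1).
Proof. by rewrite expn_sum; apply: eq_bigr => i _; rewrite expn1. Qed.

Lemma count_tot c : \sum_(0 <= a < c | coprime a c) 1 = totient c.
Proof.
rewrite totient_count_coprime big_mkcond /=; apply: eq_bigr => a _.
by rewrite coprime_sym; case: (coprime c a).
Qed.

Lemma shift0 c (F : nat -> nat) : 1 < c ->
  \prod_(0 <= a < c | coprime a c) F a = \prod_(1 <= a < c | coprime a c) F a.
Proof. by move=> c1; rewrite big_ltn_cond ?cop0 //; lia. Qed.

Lemma rev_cop c (F : nat -> nat) (Q : pred nat) :
  \prod_(1 <= a < c | Q a) F a = \prod_(1 <= a < c | Q (c - a)) F (c - a).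
Proof.
rewrite big_nat_rev big_mkcond [RHS]big_mkcond; apply: eq_big_nat => i Hi.
by have -> : 1 + c - i.+1 = c - i by lia.
Qed.

Definition Uprod c (F : nat -> nat) := \prod_(0 <= a < c | coprime a c) F a.

Lemma G_sq c : 2 < c -> G c * G c = rad c ^ totient c * (Uprod c rad * Uprod c rad).
Proof.
move=> c2.
set f := fun a => rad a * rad (c - a) * rad c.
have G1 : G c = \prod_(1 <= a < c | coprime a c && (a < c - a)) f a.
  rewrite /G big_ltn_cond //=; last lia.
  apply: eq_big => [a|a /andP[/andP[a0 alt] cop]].
    case: (leqP a c) => ac.
    2: { have -> : c - a = 0 by lia. by rewrite ltn0 !andbF. }
    rewrite cop_sub //; case: (posnP a) => [->|a0]; first by rewrite cop0 //; lia.
    by rewrite /= andbC.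
  have ca0 : 0 < c - a by lia.
  have ac : a <= c by lia.
  rewrite cop_sub // in cop.
  rewrite /f radM ?muln_gt0 ?a0 ?ca0 //.
  - by rewrite radM // cop_sub.
  - lia.
  - by rewrite coprimeMl cop cop_sub2.
have T1 : \prod_(1 <= a < c | coprime a c) f a = G c * G c.
  rewrite (bigID (fun a => a < c - a)) /= -G1; congr (_ * _).
  rewrite rev_cop G1 big_mkcond [RHS]big_mkcond; apply: eq_big_nat => i Hi.
  have -> : c - (c - i) = i by lia.
  rewrite cop_sub2; last lia.
  case ic: (coprime i c) => //=.
  have ne := cop_half _ _ c2 ic.
  have -> : ~~ (c - i < i) = (i < c - i) by apply/idP/idP; lia.
  case: ifP => // _; rewrite /f; have -> : c - (c - i) = i by lia.
  by rewrite (mulnC (rad (c - i))).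
rewrite -T1 /f !big_split /= mulnC; congr (_ * _).
  by rewrite -(shift0 c (fun _ => rad c) (ltnW c2)) prod_const count_tot.
rewrite /Uprod !(shift0 c rad (ltnW c2)); congr (_ * _).
rewrite [RHS]rev_cop big_mkcond [RHS]big_mkcond; apply: eq_big_nat => i Hi.
by rewrite cop_sub2 //; lia.
Qed.

Lemma U1 c : 1 < c -> (totient c)`! <= Uprod c id.
Proof.
move=> c1; rewrite /Uprod -big_filter.
have -> : totient c = size [seq a <- index_iota 0 c | coprime a c].
  by rewrite size_filter -sum1_count count_tot.
apply: fact_le_prod; first by rewrite filter_uniq // iota_uniq.
apply/allP => a; rewrite mem_filter => /andP[ac _].
by case: (posnP a) ac => [->|//]; rewrite cop0.
Qed.

Lemma U2 c : 1 < c -> Uprod c id = Uprod c rad * Uprod c (Sf c).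
Proof.
move=> c1; rewrite /Uprod big_mkcond [X in _ = X * _]big_mkcond [X in _ = _ * X]big_mkcond -big_split /=.
apply: eq_big_nat => a Ha.
case ac: (coprime a c) => //.
apply: rad_S; case: (posnP a) ac => [->|a0]; first by rewrite cop0.
move=> _ /=; lia.
Qed.

Lemma Sf_gt0 N a : 0 < Sf N a.
Proof. by apply: prodn_gt0 => p; rewrite expn_gt0; case: p. Qed.

Lemma U3 c : Uprod c (Sf c) <= \prod_(0 <= p < c.+1 | prime p) p ^ E p c.
Proof.
rewrite -prodS big_nat_recr //= /Uprod.
apply: (leq_trans _ (leq_pmulr _ (Sf_gt0 _ _))).
rewrite big_mkcond /=; apply: leq_prod => a _.
by case: ifP => // _; apply: Sf_gt0.
Qed.

Lemma P1 c : 0 < c ->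
  let y := \prod_(p <- primes c) p.-1 in
  [/\ (size (primes c))`! <= y, rad c <= (size (primes c)).+1 * y &
      totient c * rad c = c * y].
Proof.
move=> c0 y; split; last exact: totient_rad.
- have -> : y = \prod_(x <- map predn (primes c)) x by rewrite big_map.
  rewrite -(size_map predn); apply: fact_le_prod.
    rewrite map_inj_in_uniq ?primes_uniq // => p q.
    rewrite !mem_primes => /and3P[pp _ _] /and3P[qp _ _].
    have := prime_gt1 pp; have := prime_gt1 qp; lia.
  apply/allP => x /mapP[p]; rewrite mem_primes => /and3P[pp _ _] ->.
  have := prime_gt1 pp; lia.
- have := ratio (primes c) 1 (ltn0Sn 0) (sorted_primes c).
  rewrite /rad /y mul1n add1n; apply.
  by apply/allP => p; rewrite mem_primes => /and3P[pp _ _]; apply: prime_gt1.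
Qed.
Open Scope R_scope.

Lemma INR_muln m n : INR (m * n)%N = INR m * INR n.
Proof. by rewrite -multE mult_INR. Qed.

Lemma INR_expn m n : INR (m ^ n)%N = INR m ^ n.
Proof. elim: n => [|n IH]; first by rewrite expn0. by rewrite expnS INR_muln IH. Qed.

Lemma INR_leq m n : (m <= n)%N -> INR m <= INR n.
Proof. by move/leP; apply: le_INR. Qed.

Lemma INR_pos n : (0 < n)%N -> 0 < INR n.
Proof. by move/ltP; apply: lt_0_INR. Qed.

Lemma exp_mono x y : x <= y -> exp x <= exp y.
Proof. case=> [h|->]; [left; exact: exp_increasing | right; reflexivity]. Qed.

Lemma ln_mono x y : 0 < x -> x <= y -> ln x <= ln y.
Proof. move=> x0 [h|->]; [left; exact: ln_increasing | right; reflexivity]. Qed.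

Lemma ln_le_sub1 y : 0 < y -> ln y <= y - 1.
Proof. move=> y0; have := exp_ineq1_le (ln y); rewrite exp_ln //; lra. Qed.

Lemma ln_succ x : 0 < x -> ln (x + 1) <= ln x + / x.
Proof.
move=> x0.
have -> : x + 1 = x * ((x + 1) / x) by field; lra.
rewrite ln_mult; last first.
  apply: Rdiv_lt_0_compat; lra.
  done.
have := ln_le_sub1 ((x + 1) / x) ltac:(apply: Rdiv_lt_0_compat; lra).
have -> : (x + 1) / x - 1 = / x by field; lra.
lra.
Qed.

Lemma hstep x : 1 <= x ->
  ln (x + 1) / ((x + 1) * x) <= (2 + ln x) / x - (2 + ln (x + 1)) / (x + 1).
Proof.
move=> x1.
have x0 : 0 < x by lra.
have Hs := ln_succ x x0.
have Hi : / x <= 1 by rewrite -Rinv_1; apply: Rinv_le_contravar; lra.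
have H1 : 0 <= 2 - (x + 1) * (ln (x + 1) - ln x).
  have : (x + 1) * (ln (x + 1) - ln x) <= (x + 1) * / x.
    apply: Rmult_le_compat_l; lra.
  have -> : (x + 1) * / x = 1 + / x by field; lra.
  lra.
have E : (2 + ln x) / x - (2 + ln (x + 1)) / (x + 1) - ln (x + 1) / ((x + 1) * x)
   = (2 - (x + 1) * (ln (x + 1) - ln x)) / ((x + 1) * x) by field; lra.
have : 0 <= (2 - (x + 1) * (ln (x + 1) - ln x)) / ((x + 1) * x).
  apply: Rmult_le_pos => //; left; apply: Rinv_0_lt_compat; nra.
lra.
Qed.

Lemma ln_ge0 x : 1 <= x -> 0 <= ln x.
Proof. move=> x1; rewrite -ln_1; apply: ln_mono; lra. Qed.

Lemma R1 N (e : nat -> nat) : (forall p, prime p -> (p * (p - 1) * e p <= N)%N) ->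
  forall M, (1 <= M)%N ->
  ln (INR (\prod_(0 <= p < M.+1 | prime p) p ^ e p)%N) <=
    INR N * (2 - (2 + ln (INR M)) / INR M).
Proof.
move=> He; elim=> [//|M IH] _.
case: (posnP M) => [->|M0].
  rewrite big_nat_cond big1; last by case=> [|[|p]] //.
  rewrite /= ln_1; field_simplify; lra.
have {}IH := IH M0.
rewrite big_mkcond big_nat_recr // -big_mkcond INR_muln.
have Ppos : (0 < \prod_(0 <= p < M.+1 | prime p) p ^ e p)%N.
  by apply: prodn_cond_gt0 => p pp; rewrite expn_gt0 prime_gt0.
set P := (\prod_(0 <= p < M.+1 | prime p) p ^ e p)%N in IH Ppos *.
set t := (if prime M.+1 then M.+1 ^ e M.+1 else 1)%N.
have tpos : (0 < t)%N by rewrite /t; case: ifP => // _; rewrite expn_gt0.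
rewrite ln_mult; try exact: INR_pos.
rewrite S_INR.
set x := INR M in IH *.
have x1 : 1 <= x by rewrite /x -[1]/(INR 1); apply: INR_leq.
have L0 : 0 <= ln (x + 1) by apply: ln_ge0; lra.
have D0 : 0 < (x + 1) * x by nra.
have Q0 : 0 <= ln (x + 1) / ((x + 1) * x).
  apply: Rmult_le_pos => //; left; exact: Rinv_0_lt_compat.
have N0 := pos_INR N.
have Ht : ln (INR t) <= INR N * (ln (x + 1) / ((x + 1) * x)).
  rewrite /t; case: ifP => pM; last first.
    rewrite /= ln_1; exact: Rmult_le_pos.
  rewrite INR_expn S_INR -/x ln_pow; last lra.
  have := INR_leq _ _ (He _ pM); rewrite !INR_muln S_INR -/x.
  have -> : (M.+1 - 1 = M)%N by lia.
  rewrite -/x => H.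
  have -> : INR (e M.+1) * ln (x + 1) =
      ((x + 1) * x * INR (e M.+1)) * (ln (x + 1) / ((x + 1) * x)) by field; lra.
  exact: Rmult_le_compat_r.
have := hstep x x1.
have Hm : forall a b, a <= b -> INR N * a <= INR N * b by move=> a b; apply: Rmult_le_compat_l.
move/Hm => H2.
lra.
Qed.

Lemma R2 c : (1 <= c)%N ->
  ln (INR (\prod_(0 <= p < c.+1 | prime p) p ^ E p c)%N) <= 2 * INR c.
Proof.
move=> c1.
have := R1 c (fun p => E p c) (fun p pp => E_bound p c pp) c c1.
have x1 : 1 <= INR c by rewrite -[1]/(INR 1); apply: INR_leq.
have : 0 <= (2 + ln (INR c)) / INR c.
  apply: Rmult_le_pos; first by have := ln_ge0 _ x1; lra.
  left; apply: Rinv_0_lt_compat; lra.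
have := pos_INR c.
nra.
Qed.

Lemma exp_pow x n : exp x ^ n = exp (INR n * x).
Proof.
elim: n => [|n IH]; first by rewrite /= Rmult_0_l exp_0.
by rewrite S_INR [exp x ^ _]/= IH -exp_plus; congr exp; ring.
Qed.

Lemma succ_pow n : (n.+1 ^ n <= 3 * n ^ n)%N.
Proof.
case: n => [//|n].
apply/leP; apply: INR_le; rewrite INR_muln !INR_expn.
set x := INR n.+1.
have x0 : 0 < x by apply: INR_pos.
have -> : INR n.+2 = x * (1 + / x) by rewrite S_INR -/x; field; lra.
rewrite Rpow_mult_distr Rmult_comm; apply: Rmult_le_compat_r.
  by apply: pow_le; lra.
apply: (Rle_trans _ (exp (/ x) ^ n.+1)).
  apply: pow_incr; split; last exact: exp_ineq1_le.
  have : 0 < / x by apply: Rinv_0_lt_compat.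
  lra.
rewrite exp_pow -/x Rinv_r; last lra.
have -> : INR 3 = 3 by rewrite /INR; ring.
exact: exp_le_3.
Qed.

Lemma nn_fact n : (n ^ n <= 3 ^ n * n`!)%N.
Proof.
elim: n => [//|n IH].
rewrite factS expnS [(3 ^ n.+1)%N]expnS.
have := succ_pow n.
set a := (n.+1 ^ n)%N; set b := (n ^ n)%N; set d := (3 ^ n)%N; set f := n`!.
move: IH; rewrite -/b -/d -/f => IH H.
nia.
Qed.

Lemma big_bound A m : (0 < A)%N -> (A ^ m.+1 <= A ^ A.+1 * m`!)%N.
Proof.
move=> A0; elim: m => [|m IH]; first by rewrite fact0 muln1 leq_pexp2l.
case: (leqP A m.+1) => Am.
  rewrite expnS factS.
  set a := (A ^ m.+1)%N in IH *; set b := (A ^ A.+1)%N in IH *; set f := m`! in IH *.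
  nia.
apply: (leq_trans (leq_pexp2l A0 (_ : m.+2 <= A.+1)%N)); first lia.
by apply: leq_pmulr; apply: fact_gt0.
Qed.

Lemma rad_gt0 n : (0 < rad n)%N.
Proof.
rewrite /rad big_seq; apply: prodn_cond_gt0 => p.
by rewrite mem_primes => /and3P[pp _ _]; exact: prime_gt0.
Qed.

Lemma INR_pos' n : (0 < n)%N -> 0 < INR n.
Proof. exact: INR_pos. Qed.

Lemma ln_INR_mul m n : (0 < m)%N -> (0 < n)%N -> ln (INR (m * n)%N) = ln (INR m) + ln (INR n).
Proof. by move=> m0 n0; rewrite INR_muln ln_mult //; apply: INR_pos. Qed.

Lemma ln_INR_exp m n : (0 < m)%N -> ln (INR (m ^ n)%N) = INR n * ln (INR m).
Proof. by move=> m0; rewrite INR_expn ln_pow //; apply: INR_pos. Qed.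

Lemma ln_INR_le m n : (0 < m)%N -> (m <= n)%N -> ln (INR m) <= ln (INR n).
Proof. by move=> m0 mn; apply: ln_mono; [apply: INR_pos | apply: INR_leq]. Qed.

Lemma main_bound (Eb : nat) (HE : forall m, (81 ^ m.+1 <= Eb * m`!)%N) (Eb0 : (0 < Eb)%N) :
  forall c : nat, leq 3 c ->
      Rpower (INR (G c)) (2 / INR (totient c)) > / (18 * INR Eb) * INR c.
Proof.
have Eb0R : 0 < INR Eb by apply: INR_pos.
move=> c c3.
have c0 : (0 < c)%N by lia.
have c1 : (1 < c)%N by lia.
have c2 : (2 < c)%N by lia.
set phi := totient c.
have phi0 : (0 < phi)%N by rewrite totient_gt0.
have radc0 := rad_gt0 c.
have URpos : (0 < Uprod c rad)%N by apply: prodn_gt0 => a; apply: rad_gt0.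
have USpos : (0 < Uprod c (Sf c))%N by apply: prodn_gt0 => a; apply: Sf_gt0.
have UIpos : (0 < Uprod c id)%N by rewrite U2 // muln_gt0 URpos USpos.
have Gsq := G_sq c c2.
have Gpos : (0 < G c)%N.
  have : (0 < G c * G c)%N by rewrite Gsq muln_gt0 expn_gt0 radc0 muln_gt0 URpos.
  by rewrite muln_gt0 => /andP[].
have [Hm Hrad Htr] := P1 c c0.
set m := size (primes c) in Hm Hrad.
set y := \prod_(p <- primes c) p.-1 in Hm Hrad Htr.
have y0 : (0 < y)%N by apply: leq_trans (fact_gt0 m) Hm.
set g := ln (INR (G c)).
set r := ln (INR (rad c)).
set RU := ln (INR (Uprod c rad)).
set AU := ln (INR (Uprod c id)).
set SU := ln (INR (Uprod c (Sf c))).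
set lf := ln (INR phi).
set lfa := ln (INR phi`!).
set lc := ln (INR c).
set ly := ln (INR y).
set lE := ln (INR Eb).
set l3 := ln 3.
set P := INR phi.
have P0 : 0 < P by apply: INR_pos.
have H1 : g + g = P * r + (RU + RU).
  have := congr1 (fun n => ln (INR n)) Gsq => /=.
  rewrite ln_INR_mul // ln_INR_mul ?expn_gt0 ?radc0 ?muln_gt0 ?URpos //.
  by rewrite ln_INR_exp // ln_INR_mul.
have H2 : AU = RU + SU by rewrite /AU U2 // ln_INR_mul.
have H3 : SU <= 2 * INR c.
  apply: Rle_trans (R2 c c0).
  apply: ln_INR_le => //; exact: U3.
have H4 : lfa <= AU by apply: ln_INR_le; [apply: fact_gt0 | apply: U1].
have H5 : P * lf <= P * l3 + lfa.
  have pp0 : (0 < phi ^ phi)%N by rewrite expn_gt0 phi0.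
  have := ln_INR_le _ _ pp0 (nn_fact phi).
  rewrite ln_INR_exp // ln_INR_mul ?expn_gt0 ?fact_gt0 // ln_INR_exp //.
  by have -> : INR 3 = 3 by rewrite /INR; ring.
have H6 : lf + r = lc + ly.
  have := congr1 (fun n => ln (INR n)) Htr => /=.
  by rewrite !ln_INR_mul.
have H7 : (c <= phi * m.+1)%N.
  have : (c * y <= phi * m.+1 * y)%N.
    by rewrite -Htr -mulnA leq_mul2l Hrad orbT.
  by rewrite leq_mul2r (negbTE (lt0n_neq0 y0)).
have H7R : INR c <= P * (INR m + 1).
  by rewrite -S_INR -INR_muln; apply: INR_leq.
have H8 : 4 * (INR m + 1) <= lE + ly.
  have e81 : 4 <= ln 81.
    rewrite -(ln_exp 4); apply: ln_mono; first exact: exp_pos.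
    have -> : 4 = 1 + 1 + 1 + 1 by ring.
    rewrite !exp_plus.
    have h3 := exp_le_3; have h0 := exp_pos 1.
    have h2 : exp 1 * exp 1 <= 9 by nra.
    have h2' : 0 <= exp 1 * exp 1 by nra.
    have -> : exp 1 * exp 1 * exp 1 * exp 1 = (exp 1 * exp 1) * (exp 1 * exp 1) by ring.
    nra.
  have p81 : (0 < 81 ^ m.+1)%N by rewrite expn_gt0.
  have := ln_INR_le _ _ p81 (leq_trans (HE m) (leq_mul (leqnn Eb) Hm)).
  rewrite ln_INR_exp // ln_INR_mul // -/lE -/ly S_INR.
  have -> : INR 81 = 81 by rewrite /INR; ring.
  move=> H; have := pos_INR m; nra.
have H9 : 0 <= lf by apply: ln_ge0; rewrite -[1]/(INR 1); apply: INR_leq.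
have H7' : 4 * INR c <= P * (lE + ly) by nra.
have Hmain : P * (lc - 2 * l3 - lE) <= 2 * g by nra.
have Hdiv : lc - 2 * l3 - lE <= 2 / P * g.
  have -> : 2 / P * g = (2 * g) * / P by field; lra.
  have -> : lc - 2 * l3 - lE = (P * (lc - 2 * l3 - lE)) * / P by field; lra.
  apply: Rmult_le_compat_r => //; left; exact: Rinv_0_lt_compat.
rewrite /Rpower -/g.
have cR : 0 < INR c by apply: INR_pos.
have ex : exp (lc - 2 * l3 - lE) = INR c / (9 * INR Eb).
  rewrite /Rminus !exp_plus !exp_Ropp /lc /lE exp_ln; last exact: cR.
  rewrite exp_ln; last exact: Eb0R.
  rewrite /l3.
  have -> : 2 * ln 3 = ln 3 + ln 3 by ring.
  rewrite exp_plus exp_ln; last by clear; lra.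
  field; apply: Rgt_not_eq; exact: Eb0R.
rewrite /Rgt.
apply: (Rlt_le_trans _ _ _ _ (exp_mono _ _ Hdiv)); rewrite ex.
clear -cR Eb0R.
move: cR Eb0R; set a := INR c; set b := INR Eb => a0 b0.
have -> : / (18 * b) * a = a / (9 * b) / 2 by field; lra.
have : 0 < a / (9 * b) by apply: Rdiv_lt_0_compat; lra.
lra.
Qed.

Theorem theorem3 :
  exists k : R, 0 < k /\
    forall c : nat, leq 3 c ->
      Rpower (INR (G c)) (2 / INR (totient c)) > k * INR c.
Proof.
have Eb0 : (0 < 81 ^ 82)%N by rewrite expn_gt0.
exists (/ (18 * INR (81 ^ 82)%N)); split.
  apply: Rinv_0_lt_compat; apply: Rmult_lt_0_compat; last exact: INR_pos.
  by clear; lra.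
exact: (main_bound (81 ^ 82)%N (fun m => big_bound 81 m erefl) Eb0).
Qed.
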